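(* For every $d\ge1$ the function $g_d\colon[1,\infty)\to[1,\infty)$ satisfies: (i) $g_d$ is uniformly continuous, strictly increasing and convex; (ii) $g_d(1)=1$ and $\lim_{t\to\infty}g_d(t)=\infty$; (iii) $g_d$ is differentiable on $(1,\infty)$ with $g_d'(t)=\frac{\Gamma(\frac d2+1)}{\sqrt{\pi}\,\Gamma(\frac{d+1}{2})}\,\frac1d\,\bigl(1-\frac1{t^2}\bigr)^{(d-1)/2}$ for $t>1$; (iv) $g_d(t)-1=\mathcal O\bigl((t-1)^{(d+1)/2}\bigr)$ as $t\to1^+$; (v) $g_d$ has an inverse $g_d^{-1}\colon[1,\infty)\to[1,\infty)$ whose minimal modulus of continuity $w(h)=\sup_{s,t\ge1,\,|s-t|<h}|g_d^{-1}(s)-g_d^{-1}(t)|$ equals $g_d^{-1}(1+h)-1$ for all $h\ge0$; (vi) $w(h)=\mathcal O\bigl(h^{2/(d+1)}\bigr)$ as $h\to0^+$; (vii) $g_d^{-1}(t)=\mathcal O(t)$ as $t\to\infty$.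
   Context: For $d\ge1$ and $t\ge1$ define \[g_d(t)=1+\frac{\Gamma(\frac d2+1)}{\sqrt{\pi}\,\Gamma(\frac{d+1}{2})}\left(\frac{t}{d}\Bigl(1-\frac1{t^2}\Bigr)^{\frac{d+1}{2}}-\int_0^{\arccos(1/t)}\sin^d(s)\,\mathrm{d}s\right).\] Equivalently, for any ellipsoid $E=\{x\colon (x-\mu)^\top\Sigma^{-1}(x-\mu)\le1\}$ with $\Sigma$ symmetric positive definite, and $x\notin E$, $g_d(d_\Sigma(x,\mu))=\mathrm{vol}_d(\mathrm{conv}(E\cup\{x\}))/\mathrm{vol}_d(E)$, where $d_\Sigma(x,\mu)=\sqrt{(x-\mu)^\top\Sigma^{-1}(x-\mu)}$. *)

(* Defs.v *)
From Stdlib Require Import Reals Lra Classical ClassicalEpsilon.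
Open Scope R_scope.

(* Gamma function at half-integers: gamma_half n = Gamma(n/2) for n >= 1,
   determined by Gamma(1/2) = sqrt PI, Gamma(1) = 1, Gamma(x+1) = x Gamma(x).
   (gamma_half 0 is a junk value, never used.) *)
Fixpoint gamma_half (n : nat) : R :=
  match n with
  | O => 0
  | S O => sqrt PI
  | S (S O) => 1
  | S (S m) => INR m / 2 * gamma_half m
  end.

(* Total Riemann integral: RiemannInt if f is Riemann integrable on [a,b], else 0
   (the value of RiemannInt does not depend on the integrability proof). *)
Definition Rint (f : R -> R) (a b : R) : R :=
  match excluded_middle_informative (inhabited (Riemann_integrable f a b)) with
  | left H => RiemannInt (epsilon H (fun _ => True))
  | right _ => 0
  end.

(* c_d = Gamma(d/2+1) / (sqrt(pi) Gamma((d+1)/2)) *)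
Definition cst (d : nat) : R :=
  gamma_half (d + 2) / (sqrt PI * gamma_half (d + 1)).

(* x^y for x >= 0, y > 0, with the convention 0^y = 0
   (Stdlib's Rpower 0 y is exp(y * ln 0) = 1, a junk value). *)
Definition rpow (x y : R) : R :=
  if Rlt_dec 0 x then Rpower x y else 0.

Definition g (d : nat) (t : R) : R :=
  1 + cst d * (t / INR d * rpow (1 - 1 / t ^ 2) ((INR d + 1) / 2)
               - Rint (fun s => sin s ^ d) 0 (acos (1 / t))).

(* The set whose supremum is the minimal modulus of continuity w(h) of f on [1,oo):
   all |f s - f t| with s,t >= 1, |s - t| < h, together with 0 (convention sup {} = 0). *)
Definition modc_set (f : R -> R) (h : R) (x : R) : Prop :=
  x = 0 \/ exists s t, 1 <= s /\ 1 <= t /\ Rabs (s - t) < h /\ x = Rabs (f s - f t).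

(* Main.v *)
Require Import Defs.
From Stdlib Require Import Reals Lra Lia Psatz Classical ClassicalEpsilon FunctionalExtensionality.
From Coquelicot Require Import Coquelicot.
Open Scope R_scope.

Lemma cont_sinpow (d : nat) x : continuity_pt (fun s => sin s ^ d) x.
Proof.
  apply derivable_continuous_pt. reg.
Qed.

Lemma Rint_eq d x : Rint (fun s => sin s ^ d) 0 x = RInt (fun s => sin s ^ d) 0 x.
Proof.
  unfold Rint. destruct excluded_middle_informative as [H|H].
  - rewrite (RInt_Reals _ _ _ (epsilon H (fun _ => True))). reflexivity.
  - exfalso. apply H. destruct (Rle_or_lt 0 x).
    + constructor. apply continuity_implies_RiemannInt; auto. intros; apply cont_sinpow.
    + constructor. apply RiemannInt_P1. apply continuity_implies_RiemannInt; [lra|].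
      intros; apply cont_sinpow.
Qed.

Lemma rpow_sqrt u k : rpow u (INR k / 2) = if Rlt_dec 0 u then sqrt u ^ k else 0.
Proof.
  unfold rpow. destruct Rlt_dec; auto.
  replace (INR k / 2) with (/2 * INR k) by field.
  rewrite <- Rpower_mult, Rpower_sqrt by auto. apply Rpower_pow. apply sqrt_lt_R0; auto.
Qed.

Lemma Rpower_half x k : 0 < x -> Rpower x (INR k / 2) = sqrt x ^ k.
Proof.
  intros. replace (INR k / 2) with (/2 * INR k) by field.
  rewrite <- Rpower_mult, Rpower_sqrt by auto. apply Rpower_pow. apply sqrt_lt_R0; auto.
Qed.

Lemma sq_eq t : 0 < t -> sqrt (1 - 1 / t ^ 2) = sqrt (t^2 - 1) / t.
Proof.
  intros. destruct (Rle_or_lt (t^2-1) 0).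
  - rewrite (sqrt_neg_0 (t^2-1)) by auto. rewrite sqrt_neg_0. lra.
    assert (1 <= 1/t^2). { apply Rmult_le_reg_r with (t^2). nra. field_simplify; nra. }
    lra.
  - replace (sqrt (t^2-1)/t) with (sqrt (t^2-1)/sqrt (t^2)) by (rewrite sqrt_pow2; lra).
    rewrite <- sqrt_div_alt by nra.
    f_equal. field. lra.
Qed.

Lemma acos_eq t : 0 < t -> acos (1 / t) = atan (sqrt (t^2 - 1)).
Proof.
  intros. rewrite acos_atan by (apply Rdiv_lt_0_compat; lra).
  f_equal. unfold Rsqr. replace (1 / t * (1/t)) with (1/t^2) by (field; lra).
  rewrite sq_eq by auto. field. lra.
Qed.
Definition G d t := 1 + cst d * (t / INR d * (sqrt (t^2-1)/t)^(S d) - RInt (fun s => sin s ^ d) 0 (atan (sqrt (t^2-1)))).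
Lemma G_deriv k t : 1 < t -> is_derive (G (S k)) t (cst (S k) / INR (S k) * (sqrt (t^2-1)/t)^k).
Proof.
  intros Ht. unfold G. set (c := cst (S k)). set (D := INR (S k)).
  assert (HD : 0 < D) by (apply lt_0_INR; lia).
  auto_derive.
  - repeat split; try nra.
    + apply (ex_RInt_continuous (V:=R_CompleteNormedModule)). intros. apply continuity_pt_filterlim. apply derivable_continuous_pt. reg.
    + exists (mkposreal 1 Rlt_0_1). intros. apply derivable_continuous_pt. reg.
  - change (match k with 0%nat => 1 | S _ => INR k + 1 end) with D.
    replace (t * (t * 1) + - (1)) with (t^2-1) by ring.
    assert (Hr0 : 0 < sqrt (t^2-1)) by (apply sqrt_lt_R0; nra).
    assert (Hr2 : sqrt (t^2-1) * sqrt (t^2-1) = t^2-1) by (apply sqrt_sqrt; nra).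
    set (r := sqrt (t^2-1)) in *.
    assert (E1 : 1 * ((1 + 1) * (t * 1)) * / (2 * r) * / t + r * (- (1) * / (t * t)) = / (r * t * t)).
    { field_simplify_eq; [nra | split; lra]. }
    assert (E2 : / (1 + r * (r * 1)) = / (t * t)) by (f_equal; nra).
    assert (E3 : sin (atan r) = r * / t).
    { rewrite sin_atan. replace (1 + r²) with (t^2) by (unfold Rsqr; nra).
      rewrite sqrt_pow2 by lra. reflexivity. }
    rewrite E1, E2, E3. replace (r / t) with (r * / t) by reflexivity. set (Q := (r * / t) ^ k).
    apply Rminus_diag_uniq.
    replace (c * (1 * / D * (r * / t * (r * / t * Q)) +
   t * / D * (/ (r * t * t) * ((D + 1) * (r * / t * Q))) +
   - (1 * ((1 + 1) * (t * 1)) * / (2 * r) * / (t * t) * (r * / t * Q))) - c / D * Q)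
   with (c * Q / (D * t * t) * (r * r - (t^2 - 1))) by (field; lra).
    rewrite Hr2. ring.
Qed.
Lemma cont_sqrt1 t : 1 <= t -> continuous (fun t => sqrt (t^2-1)) t.
Proof.
  intros. apply continuity_pt_filterlim.
  apply (continuity_pt_comp (fun t => t^2-1) sqrt). reg. apply continuity_pt_sqrt. nra.
Qed.

Lemma G_cont d t : 1 <= t -> continuous (G d) t.
Proof.
  intros Ht. unfold G.
  apply (continuous_plus (fun _ => 1)). apply continuous_const.
  apply (continuous_mult (K:=R_AbsRing) (fun _ => cst d)). apply continuous_const.
  apply (continuous_minus (V:=R_NormedModule)).
  - apply (continuous_mult (K:=R_AbsRing)).
    + apply continuity_pt_filterlim. reg.
    + apply (continuous_comp _ (fun x => pow x (S d))).
      * apply (continuous_mult (K:=R_AbsRing)). apply cont_sqrt1; auto.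
        apply continuity_pt_filterlim. apply continuity_pt_inv. reg. lra.
      * apply continuity_pt_filterlim. reg.
  - apply (continuous_comp _ (fun y => RInt (fun s => sin s ^ d) 0 y)).
    + apply (continuous_comp _ atan). apply cont_sqrt1; auto.
      apply continuity_pt_filterlim. apply derivable_continuous_pt. exists (/(1+ (sqrt (t^2-1))^2)). apply derivable_pt_lim_atan.
    + apply (continuous_RInt_1 (V:=R_NormedModule) (fun s => sin s ^ d) 0 _ (fun y => RInt (fun s => sin s ^ d) 0 y)).
      exists (mkposreal 1 Rlt_0_1). intros. apply (RInt_correct (V:=R_CompleteNormedModule)).
      apply (ex_RInt_continuous (V:=R_CompleteNormedModule)). intros.
      apply continuity_pt_filterlim. apply derivable_continuous_pt. reg.
Qed.

Lemma gamma_pos n : 0 < gamma_half (S n) /\ 0 < gamma_half (S (S n)).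
Proof.
  induction n as [|n IH].
  - split. simpl. apply sqrt_lt_R0. apply PI_RGT_0. simpl. lra.
  - split. apply IH.
    change (gamma_half (S (S (S n)))) with (INR (S n) / 2 * gamma_half (S n)).
    apply Rmult_lt_0_compat. apply Rdiv_lt_0_compat. apply lt_0_INR; lia. lra. apply IH.
Qed.

Lemma cst_pos d : 0 < cst d.
Proof.
  unfold cst. replace (d + 2)%nat with (S (S d)) by lia. replace (d+1)%nat with (S d) by lia.
  destruct (gamma_pos d). apply Rdiv_lt_0_compat; auto. apply Rmult_lt_0_compat; auto.
  apply sqrt_lt_R0. apply PI_RGT_0.
Qed.

Lemma g_G d t : 0 < t -> g d t = G d t.
Proof.
  intros Ht. unfold g, G. rewrite Rint_eq, acos_eq by auto.
  rewrite <- S_INR, rpow_sqrt. destruct Rlt_dec.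
  - rewrite sq_eq; auto.
  - rewrite <- sq_eq by auto. rewrite (sqrt_neg_0 (1 - 1/t^2)) by (apply Rnot_lt_le; auto). simpl. ring.
Qed.

Lemma G_1 d : G d 1 = 1.
Proof.
  unfold G. replace (1^2-1) with 0 by ring. rewrite sqrt_0, atan_0, RInt_point.
  replace ((0/1)^(S d)) with 0 by (simpl; field). unfold zero; simpl. ring.
Qed.

Definition gp k t := cst (S k) / INR (S k) * sqrt (1 - 1/t^2) ^ k.

Lemma G_deriv2 k t : 1 < t -> is_derive (G (S k)) t (gp k t).
Proof.
  intros. unfold gp. rewrite sq_eq by lra. apply G_deriv; auto.
Qed.

Lemma sq_mono a b : 1 <= a <= b -> sqrt (1 - 1/a^2) <= sqrt (1 - 1/b^2).
Proof.
  intros. apply sqrt_le_1_alt.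
  assert (1/b^2 <= 1/a^2). { unfold Rdiv; rewrite !Rmult_1_l. apply Rinv_le_contravar; nra. }
  lra.
Qed.

Lemma sq_le1 a : 1 <= a -> sqrt (1 - 1/a^2) <= 1.
Proof.
  intros. apply Rle_trans with (sqrt 1); [apply sqrt_le_1_alt| rewrite sqrt_1; lra].
  assert (0 < 1/a^2) by (apply Rdiv_lt_0_compat; nra). lra.
Qed.

Lemma cD_pos k : 0 < cst (S k) / INR (S k).
Proof. apply Rdiv_lt_0_compat. apply cst_pos. apply lt_0_INR; lia. Qed.

Lemma gp_mono k a b : 1 <= a <= b -> gp k a <= gp k b.
Proof.
  intros. unfold gp. apply Rmult_le_compat_l. left; apply cD_pos.
  apply pow_incr. split. apply sqrt_pos. apply sq_mono; auto.
Qed.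

Lemma gp_nonneg k a : 0 <= gp k a.
Proof. unfold gp. apply Rmult_le_pos. left; apply cD_pos. apply pow_le, sqrt_pos. Qed.

Lemma gp_pos k a : 1 < a -> 0 < gp k a.
Proof.
  intros. unfold gp. apply Rmult_lt_0_compat. apply cD_pos. apply pow_lt, sqrt_lt_R0.
  assert (1/a^2 < 1). { apply Rmult_lt_reg_r with (a^2). nra. field_simplify; nra. } lra.
Qed.

Lemma gp_le k a : 1 <= a -> gp k a <= cst (S k) / INR (S k).
Proof.
  intros. unfold gp. rewrite <- (Rmult_1_r (cst (S k) / INR (S k))) at 2.
  apply Rmult_le_compat_l. left; apply cD_pos.
  apply Rle_trans with (1^k); [|rewrite pow1; lra].
  apply pow_incr. split. apply sqrt_pos. apply sq_le1; auto.
Qed.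

Lemma G_mvt k a b : 1 <= a <= b ->
  gp k a * (b - a) <= G (S k) b - G (S k) a <= gp k b * (b - a).
Proof.
  intros Hab. destruct (Req_dec a b) as [->|Hne].
  - replace (b - b) with 0 by ring. lra.
  destruct (MVT_gen (G (S k)) a b (gp k)) as [x [Hx Hd]].
  - rewrite Rmin_left, Rmax_right by lra. intros. apply G_deriv2. lra.
  - rewrite Rmin_left, Rmax_right by lra. intros. apply continuity_pt_filterlim. apply G_cont. lra.
  - rewrite Rmin_left, Rmax_right in Hx by lra. rewrite Hd.
    assert (gp k a <= gp k x) by (apply gp_mono; lra).
    assert (gp k x <= gp k b) by (apply gp_mono; lra).
    split; apply Rmult_le_compat_r; lra.
Qed.

Section Props.
Variable k : nat.
Let Gk := G (S k).
Let L := cst (S k) / INR (S k).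

Lemma G_ge1 t : 1 <= t -> 1 <= Gk t.
Proof.
  intros. destruct (G_mvt k 1 t) as [H1 _]; [lra|]. unfold Gk. rewrite G_1 in H1.
  pose proof (gp_nonneg k 1). nra.
Qed.

Lemma G_strict a b : 1 <= a < b -> Gk a < Gk b.
Proof.
  intros. set (m := (a+b)/2).
  destruct (G_mvt k a m) as [H1 _]; [unfold m; lra|].
  destruct (G_mvt k m b) as [H2 _]; [unfold m; lra|].
  pose proof (gp_nonneg k a). pose proof (gp_pos k m ltac:(unfold m; lra)).
  assert (0 < gp k m * (b - m)) by (apply Rmult_lt_0_compat; unfold m in *; lra).
  assert (0 <= gp k a * (m - a)) by (apply Rmult_le_pos; unfold m in *; lra).
  unfold Gk. lra.
Qed.

Lemma G_le a b : 1 <= a <= b -> Gk a <= Gk b.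
Proof. intros. destruct (Req_dec a b). subst; lra. left; apply G_strict; lra. Qed.

Lemma G_lip s t : 1 <= s -> 1 <= t -> Rabs (Gk s - Gk t) <= L * Rabs (s - t).
Proof.
  intros. destruct (Rle_or_lt s t).
  - destruct (G_mvt k s t) as [M1 M2]; [lra|].
    pose proof (gp_le k t ltac:(lra)). pose proof (gp_nonneg k s).
    rewrite Rabs_left1, Rabs_left1 by (unfold Gk; nra).
    unfold Gk, L in *. nra.
  - destruct (G_mvt k t s) as [M1 M2]; [lra|].
    pose proof (gp_le k s ltac:(lra)). pose proof (gp_nonneg k t).
    rewrite Rabs_right, Rabs_right by (unfold Gk; nra).
    unfold Gk, L in *. nra.
Qed.

Lemma G_convex s t l : 1 <= s -> 1 <= t -> 0 <= l <= 1 ->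
  Gk (l * s + (1 - l) * t) <= l * Gk s + (1 - l) * Gk t.
Proof.
  intros Hs Ht Hl. set (m := l * s + (1 - l) * t).
  destruct (Rle_or_lt s t).
  - assert (s <= m <= t) by (unfold m; nra).
    destruct (G_mvt k s m) as [_ M1]; [lra|].
    destruct (G_mvt k m t) as [M2 _]; [lra|].
    assert (E : l * (gp k m * (m - s)) = (1 - l) * (gp k m * (t - m))) by (unfold m; ring).
    assert (l * (Gk m - Gk s) <= l * (gp k m * (m - s))) by (apply Rmult_le_compat_l; unfold Gk; lra).
    assert ((1 - l) * (gp k m * (t - m)) <= (1 - l) * (Gk t - Gk m)) by (apply Rmult_le_compat_l; unfold Gk; lra).
    lra.
  - assert (t <= m <= s) by (unfold m; nra).
    destruct (G_mvt k t m) as [_ M1]; [lra|].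
    destruct (G_mvt k m s) as [M2 _]; [lra|].
    assert (E : (1 - l) * (gp k m * (m - t)) = l * (gp k m * (s - m))) by (unfold m; ring).
    assert ((1 - l) * (Gk m - Gk t) <= (1 - l) * (gp k m * (m - t))) by (apply Rmult_le_compat_l; unfold Gk; lra).
    assert (l * (gp k m * (s - m)) <= l * (Gk s - Gk m)) by (apply Rmult_le_compat_l; unfold Gk; lra).
    lra.
Qed.

Lemma G_lin t : 2 <= t -> 1 + gp k 2 * (t - 2) <= Gk t.
Proof.
  intros. destruct (G_mvt k 2 t) as [H1 _]; [lra|]. pose proof (G_ge1 2 ltac:(lra)).
  unfold Gk in *. lra.
Qed.

Lemma G_surj y : 1 <= y -> exists x, 1 <= x /\ Gk x = y.
Proof.
  intros Hy. destruct (Req_dec y 1) as [->|Hne].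
  - exists 1. split. lra. apply G_1.
  - pose proof (gp_pos k 2 ltac:(lra)) as Hp.
    set (T := 3 + (y - 1) / gp k 2).
    assert (HT : 2 < T) by (unfold T; assert (0 <= (y-1)/gp k 2) by (apply Rdiv_le_0_compat; lra); lra).
    assert (HGT : y < Gk T).
    { pose proof (G_lin T ltac:(lra)). unfold T in *.
      replace (gp k 2 * (3 + (y - 1) / gp k 2 - 2)) with (gp k 2 + (y - 1)) in H by (field; lra).
      lra. }
    destruct (Ranalysis5.IVT_interv (fun t => Gk t - y) 1 T) as [x [Hx Hx2]].
    + intros. apply continuity_pt_minus. apply continuity_pt_filterlim. apply G_cont. lra.
      apply continuity_pt_const. intros ? ?; reflexivity.
    + lra.
    + unfold Gk. rewrite G_1. lra.
    + lra.
    + exists x. split. lra. lra.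
Qed.

Lemma G_superadd a h : 1 <= a -> 0 <= h -> Gk a + Gk (1 + h) <= Gk 1 + Gk (a + h).
Proof.
  intros. destruct (Req_dec h 0) as [->|]. { replace (a+0) with a by ring. replace (1+0) with 1 by ring. lra. }
  set (lam := h / (a - 1 + h)).
  assert (0 < a - 1 + h) by lra.
  assert (0 <= lam <= 1). { unfold lam. split. apply Rdiv_le_0_compat; lra.
    apply Rmult_le_reg_r with (a-1+h); auto. field_simplify; lra. }
  pose proof (G_convex 1 (a + h) lam ltac:(lra) ltac:(lra) H3) as C1.
  pose proof (G_convex (a + h) 1 lam ltac:(lra) ltac:(lra) H3) as C2.
  replace (lam * 1 + (1 - lam) * (a + h)) with a in C1 by (unfold lam; field; lra).
  replace (lam * (a + h) + (1 - lam) * 1) with (1 + h) in C2 by (unfold lam; field; lra).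
  lra.
Qed.

End Props.

Definition ginv k y := epsilon (inhabits 1) (fun x => 1 <= x /\ G (S k) x = y).

Lemma ginv_spec k y : 1 <= y -> 1 <= ginv k y /\ G (S k) (ginv k y) = y.
Proof. intros. unfold ginv. apply epsilon_spec. apply G_surj; auto. Qed.

Lemma G_inj k a b : 1 <= a -> 1 <= b -> G (S k) a = G (S k) b -> a = b.
Proof.
  intros. destruct (Rtotal_order a b) as [Hl|[He|Hl]]; auto.
  - pose proof (G_strict k a b ltac:(lra)). lra.
  - pose proof (G_strict k b a ltac:(lra)). lra.
Qed.

Lemma ginv_G k t : 1 <= t -> ginv k (G (S k) t) = t.
Proof.
  intros. destruct (ginv_spec k (G (S k) t)) as [H1 H2]. apply G_ge1; auto.
  apply G_inj with k; auto.
Qed.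

Lemma ginv_1 k : ginv k 1 = 1.
Proof. rewrite <- (G_1 (S k)) at 1. apply ginv_G. lra. Qed.

Lemma ginv_diff k h s t : 0 <= h -> 1 <= t <= s -> s - t < h ->
  0 <= ginv k s - ginv k t <= ginv k (1 + h) - 1.
Proof.
  intros Hh Hts Hst.
  destruct (ginv_spec k s ltac:(lra)) as [Hb1 Hb2].
  destruct (ginv_spec k t ltac:(lra)) as [Ha1 Ha2].
  destruct (ginv_spec k (1+h) ltac:(lra)) as [HX1 HX2].
  set (a := ginv k t) in *. set (b := ginv k s) in *. set (X := ginv k (1+h)) in *.
  split.
  - destruct (Rle_or_lt a b); [lra|]. pose proof (G_strict k b a ltac:(lra)). lra.
  - destruct (Rle_or_lt (b - a) (X - 1)); auto. exfalso.
    pose proof (G_strict k (a + (X - 1)) b ltac:(lra)).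
    pose proof (G_superadd k a (X - 1) Ha1 ltac:(lra)).
    replace (1 + (X - 1)) with X in H1 by ring. rewrite G_1 in H1. lra.
Qed.

Lemma ginv_modc k h : 0 <= h -> is_lub (modc_set (ginv k) h) (ginv k (1 + h) - 1).
Proof.
  intros Hh. destruct (ginv_spec k (1+h) ltac:(lra)) as [HX1 HX2]. split.
  - intros x [->|[s [t [Hs [Ht [Hst ->]]]]]]. lra.
    destruct (Rle_or_lt t s).
    + rewrite Rabs_right in Hst by lra. pose proof (ginv_diff k h s t Hh ltac:(lra) Hst).
      rewrite Rabs_right; lra.
    + rewrite Rabs_left in Hst by lra. pose proof (ginv_diff k h t s Hh ltac:(lra) ltac:(lra)).
      rewrite Rabs_left1; lra.
  - intros B HB. destruct (Rle_or_lt (ginv k (1 + h) - 1) B); auto. exfalso.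
    set (X := ginv k (1 + h)) in *.
    assert (0 <= B) by (apply HB; left; reflexivity).
    set (y := (Rmax 1 (B + 1) + X) / 2).
    assert (Hm1 : 1 <= Rmax 1 (B+1)) by apply Rmax_l.
    assert (Hm2 : B + 1 <= Rmax 1 (B+1)) by apply Rmax_r.
    assert (Hm3 : Rmax 1 (B+1) < X) by (apply Rmax_lub_lt; lra).
    assert (1 <= y < X) by (unfold y; lra).
    pose proof (G_strict k y X ltac:(lra)). pose proof (G_ge1 k y ltac:(lra)).
    assert (Hel : modc_set (ginv k) h (Rabs (ginv k (G (S k) y) - ginv k 1))).
    { right. exists (G (S k) y), 1. repeat split; try lra. rewrite Rabs_right; lra. }
    apply HB in Hel. rewrite ginv_G, ginv_1 in Hel by lra. rewrite Rabs_right in Hel by lra.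
    unfold y in Hel. lra.
Qed.

Lemma lub_unique E a b : is_lub E a -> is_lub E b -> a = b.
Proof.
  intros [Ha1 Ha2] [Hb1 Hb2]. apply Rle_antisym; [apply Ha2 | apply Hb2]; auto.
Qed.

Lemma G_near1 k t : 1 < t < 2 ->
  Rabs (G (S k) t - 1) <= cst (S k) / INR (S k) * sqrt 2 ^ k * Rpower (t - 1) ((INR (S k) + 1) / 2).
Proof.
  intros Ht. destruct (G_mvt k 1 t) as [H1 H2]; [lra|]. rewrite G_1 in *.
  pose proof (gp_nonneg k 1).
  rewrite Rabs_right by nra.
  rewrite <- S_INR, Rpower_half by lra.
  apply Rle_trans with (gp k t * (t - 1)); [lra|]. unfold gp.
  assert (Hsq : sqrt (1 - 1/t^2) <= sqrt 2 * sqrt (t - 1)).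
  { rewrite <- sqrt_mult by lra. apply sqrt_le_1_alt.
    assert (1 - 2*(t-1) <= 1/t^2).
    { apply Rmult_le_reg_r with (t^2); [nra|]. replace (1/t^2 * t^2) with 1 by (field; lra).
      assert (0 <= (t-1)^2*(2*t+1)) by (apply Rmult_le_pos; nra). nra. }
    lra. }
  assert (Hst : t - 1 = sqrt (t - 1) ^ 2) by (rewrite pow2_sqrt; lra).
  rewrite Hst at 1.
  replace (sqrt (t-1) ^ S (S k)) with (sqrt (t-1) ^ k * sqrt (t-1) ^ 2) by (simpl; ring).
  rewrite !Rmult_assoc. apply Rmult_le_compat_l. left; apply cD_pos.
  rewrite <- !Rmult_assoc. apply Rmult_le_compat_r. apply pow_le, sqrt_pos.
  rewrite <- Rpow_mult_distr. apply pow_incr. split. apply sqrt_pos. auto.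
Qed.

Lemma ginv_small k : exists C delta, 0 < delta /\
  forall h w, 0 < h < delta -> is_lub (modc_set (ginv k) h) w ->
    Rabs w <= C * Rpower h (2 / (INR (S k) + 1)).
Proof.
  set (L := cst (S k) / INR (S k)). assert (HL : 0 < L) by apply cD_pos.
  set (e := 2 / (INR (S k) + 1)).
  assert (He : 0 <= e) by (unfold e; apply Rdiv_le_0_compat; [lra| pose proof (pos_INR (S k)); lra]).
  exists (2 / Rpower L e), (G (S k) (3/2) - 1). split.
  { pose proof (G_strict k 1 (3/2) ltac:(lra)). rewrite G_1 in H. lra. }
  intros h w Hh Hw.
  pose proof (ginv_modc k h ltac:(lra)) as Hl. rewrite (lub_unique _ _ _ Hw Hl).
  destruct (ginv_spec k (1+h) ltac:(lra)) as [HX1 HX2]. set (X := ginv k (1+h)) in *.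
  assert (HX3 : X < 3/2).
  { destruct (Rlt_or_le X (3/2)); auto. pose proof (G_le k (3/2) X ltac:(lra)). lra. }
  assert (HX4 : 1 < X).
  { destruct (Req_dec X 1) as [E|]; [|lra]. rewrite E, G_1 in HX2. lra. }
  set (m := (1 + X) / 2). set (y := m - 1).
  assert (Hy : 0 < y) by (unfold y, m; lra).
  destruct (G_mvt k m X) as [H1 _]; [unfold m; lra|].
  pose proof (G_ge1 k m ltac:(unfold m; lra)).
  assert (Hsq : sqrt y <= sqrt (1 - 1 / m^2)).
  { apply sqrt_le_1_alt. unfold y.
    assert (Hm : 1 <= m <= 5/4) by (unfold m; lra).
    assert (1/m^2 <= 2 - m).
    { apply Rmult_le_reg_r with (m^2); [nra|]. replace (1/m^2 * m^2) with 1 by (field; lra).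
      assert (0 <= (m-1)*(1 + m - m^2)) by (apply Rmult_le_pos; nra). nra. }
    lra. }
  assert (Hyy : y = sqrt y ^ 2) by (rewrite pow2_sqrt; lra).
  assert (Hlow : L * sqrt y ^ (S (S k)) <= h).
  { apply Rle_trans with (gp k m * (X - m)); [|lra]. unfold gp. fold L.
    replace (X - m) with (sqrt y ^ 2) by (rewrite <- Hyy; unfold y, m; field).
    replace (sqrt y ^ S (S k)) with (sqrt y ^ k * sqrt y ^ 2) by (simpl; ring).
    rewrite <- Rmult_assoc. apply Rmult_le_compat_r. apply pow_le, sqrt_pos.
    apply Rmult_le_compat_l. lra. apply pow_incr. split; auto. apply sqrt_pos. }
  assert (Hsy : 0 < sqrt y) by (apply sqrt_lt_R0; auto).
  assert (Hpos : 0 < L * sqrt y ^ S (S k)) by (apply Rmult_lt_0_compat; auto; apply pow_lt; auto).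
  pose proof (Rle_Rpower_l _ _ e He (conj Hpos Hlow)) as HP.
  rewrite <- Rpower_mult_distr in HP by (auto; apply pow_lt; auto).
  assert (Hid : Rpower (sqrt y ^ S (S k)) e = y).
  { rewrite <- Rpower_pow by auto. rewrite Rpower_mult.
    replace (INR (S (S k)) * e) with (INR 2).
    2: { unfold e; rewrite (S_INR (S k)). replace (INR 2) with 2 by (simpl; lra).
         field. pose proof (pos_INR (S k)); lra. }
    rewrite Rpower_pow by auto. auto. }
  rewrite Hid in HP.
  assert (HLe : 0 < Rpower L e) by (unfold Rpower; apply exp_pos).
  rewrite Rabs_right by lra.
  replace (X - 1) with (2 * y) by (unfold y, m; field).
  unfold Rdiv. rewrite Rmult_assoc. apply Rmult_le_compat_l. lra.
  apply Rmult_le_reg_l with (Rpower L e); auto.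
  field_simplify; lra.
Qed.

Lemma ginv_lin k : exists C T, forall t, T <= t -> Rabs (ginv k t) <= C * t.
Proof.
  pose proof (gp_pos k 2 ltac:(lra)) as Hp.
  exists (2 + / gp k 2), 1. intros t Ht.
  destruct (ginv_spec k t Ht) as [H1 H2]. set (x := ginv k t) in *.
  rewrite Rabs_right by lra.
  assert (0 < / gp k 2) by (apply Rinv_0_lt_compat; auto).
  destruct (Rle_or_lt x 2).
  - nra.
  - pose proof (G_lin k x ltac:(lra)). rewrite H2 in H3.
    assert (x - 2 <= (t - 1) / gp k 2).
    { apply Rmult_le_reg_r with (gp k 2); auto. field_simplify; lra. }
    unfold Rdiv in H4. nra.
Qed.

Theorem lemma2 (d : nat) (hd : (1 <= d)%nat) :
  (* g_d maps [1,oo) to [1,oo) *)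
  (forall t, 1 <= t -> 1 <= g d t) /\
  (* (i) uniformly continuous, strictly increasing, convex on [1,oo) *)
  (forall eps, 0 < eps -> exists delta, 0 < delta /\
     forall s t, 1 <= s -> 1 <= t -> Rabs (s - t) < delta ->
       Rabs (g d s - g d t) < eps) /\
  (forall s t, 1 <= s -> s < t -> g d s < g d t) /\
  (forall s t l, 1 <= s -> 1 <= t -> 0 <= l <= 1 ->
     g d (l * s + (1 - l) * t) <= l * g d s + (1 - l) * g d t) /\
  (* (ii) *)
  g d 1 = 1 /\
  (forall M, exists T, forall t, T <= t -> M < g d t) /\
  (* (iii) *)
  (forall t, 1 < t ->
     derivable_pt_lim (g d) t
       (cst d * / INR d * Rpower (1 - 1 / t ^ 2) ((INR d - 1) / 2))) /\
  (* (iv) *)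
  (exists C delta, 0 < delta /\
     forall t, 1 < t < 1 + delta ->
       Rabs (g d t - 1) <= C * Rpower (t - 1) ((INR d + 1) / 2)) /\
  (* (v)-(vii) *)
  (exists ginv : R -> R,
     (forall t, 1 <= t -> 1 <= ginv t /\ g d (ginv t) = t /\ ginv (g d t) = t) /\
     (forall h, 0 <= h -> is_lub (modc_set ginv h) (ginv (1 + h) - 1)) /\
     (exists C delta, 0 < delta /\
        forall h w, 0 < h < delta -> is_lub (modc_set ginv h) w ->
          Rabs w <= C * Rpower h (2 / (INR d + 1))) /\
     (exists C T, forall t, T <= t -> Rabs (ginv t) <= C * t)).
Proof.
  destruct d as [|k]; [lia|]. clear hd.
  set (L := cst (S k) / INR (S k)). assert (HL : 0 < L) by apply cD_pos.
  split; [|split; [|split; [|split; [|split; [|split; [|split; [|split]]]]]]].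
  - intros t Ht. rewrite g_G by lra. apply G_ge1; auto.
  - intros eps Heps. exists (eps / (L + 1)). split. apply Rdiv_lt_0_compat; lra.
    intros s t Hs Ht Hst. rewrite !g_G by lra.
    apply Rle_lt_trans with (L * Rabs (s - t)). apply G_lip; auto.
    apply Rle_lt_trans with (L * (eps / (L + 1))).
    apply Rmult_le_compat_l; lra.
    apply Rmult_lt_reg_r with (L + 1). lra. field_simplify; lra.
  - intros s t Hs Hst. rewrite !g_G by lra. apply G_strict; lra.
  - intros s t l Hs Ht Hl. rewrite !g_G by nra. apply G_convex; auto.
  - rewrite g_G by lra. apply G_1.
  - intros M. pose proof (gp_pos k 2 ltac:(lra)) as Hp.
    exists (3 + Rabs M / gp k 2). intros t Ht.
    assert (0 <= Rabs M / gp k 2) by (apply Rdiv_le_0_compat; [apply Rabs_pos|lra]).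
    rewrite g_G by lra. pose proof (G_lin k t ltac:(lra)).
    assert (gp k 2 * (1 + Rabs M / gp k 2) <= gp k 2 * (t - 2)) by (apply Rmult_le_compat_l; lra).
    replace (gp k 2 * (1 + Rabs M / gp k 2)) with (gp k 2 + Rabs M) in H1 by (field; lra).
    pose proof (Rle_abs M). lra.
  - intros t Ht. apply is_derive_Reals.
    apply is_derive_ext_loc with (G (S k)).
    + exists (mkposreal (t - 1) ltac:(lra)). intros y Hy.
      change (Rabs (y - t) < t - 1) in Hy. apply Rabs_lt_between' in Hy.
      symmetry. apply g_G. lra.
    + replace (cst (S k) * / INR (S k) * Rpower (1 - 1 / t ^ 2) ((INR (S k) - 1) / 2)) with (gp k t).
      apply G_deriv2; auto.
      unfold gp. replace ((INR (S k) - 1) / 2) with (INR k / 2) by (rewrite S_INR; field).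
      rewrite Rpower_half. reflexivity.
      assert (1/t^2 < 1). { apply Rmult_lt_reg_r with (t^2). nra. replace (1/t^2*t^2) with 1 by (field; lra). nra. }
      lra.
  - exists (L * sqrt 2 ^ k), 1. split. lra. intros t Ht.
    rewrite g_G by lra. apply G_near1. lra.
  - exists (ginv k). split; [|split; [|split]].
    + intros t Ht. destruct (ginv_spec k t Ht) as [H1 H2].
      rewrite !g_G by lra. split; auto. split; auto. apply ginv_G; auto.
    + apply ginv_modc.
    + apply ginv_small.
    + apply ginv_lin.
Qed.
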